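(* Let $S$ be a finite monoid. Then every almost pure $S$-act is absolutely pure.
   Context: Let $S$ be a monoid. A (right) $S$-act is a set $A$ with a map $A\times S\to A$, $(a,s)\mapsto as$, such that $a1=a$ and $a(st)=(as)t$. Given an $S$-act $A$ and a set $X$ of variables, an equation over $A$ is an expression of one of the forms $xs=yt$, $xs=xt$ or $xs=a$ with $x,y\in X$, $s,t\in S$, $a\in A$. If $A$ is a subact of $B$, a solution in $B$ of a set $\Sigma$ of such equations is a family $(b_x)_{x\in X}$ in $B$ with $b_xs=b_yt$ for each $xs=yt\in\Sigma$ and $b_xs=a$ for each $xs=a\in\Sigma$. $\Sigma$ is consistent if it has a solution in some $S$-act containing $A$ as a subact. $A$ is almost pure if every finite consistent set of equations over $A$ in one variable has a solution in $A$, and absolutely pure if every finite consistent set of equations over $A$ (in finitely many variables) has a solution in $A$. *)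

(* Defs.v *)
From Stdlib Require Import List.
From mathcomp Require Import all_boot.
Set Implicit Arguments. Unset Strict Implicit. Unset Printing Implicit Defensive.

Definition is_monoid (S : Type) (mul : S -> S -> S) (one : S) : Prop :=
  (forall s t u, mul s (mul t u) = mul (mul s t) u) /\
  (forall s, mul one s = s) /\ (forall s, mul s one = s).

Definition is_act (S : Type) (mul : S -> S -> S) (one : S)
  (A : Type) (act : A -> S -> A) : Prop :=
  (forall a, act a one = a) /\ (forall a s t, act a (mul s t) = act (act a s) t).

(* Equations over A in the variables X: x s = y t (which covers x s = x t
   when y = x) and x s = a. *)
Inductive equation (S A X : Type) : Type :=
  | EqVV : X -> S -> X -> S -> equation S A X
  | EqVC : X -> S -> A -> equation S A X.

Definition solves (S A X B : Type) (actB : B -> S -> B) (i : A -> B)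
  (b : X -> B) (e : equation S A X) : Prop :=
  match e with
  | EqVV x s y t => actB (b x) s = actB (b y) t
  | EqVC x s a => actB (b x) s = i a
  end.

Definition solvable_in (S A X B : Type) (actB : B -> S -> B) (i : A -> B)
  (E : seq (equation S A X)) : Prop :=
  exists b : X -> B, forall e, List.In e E -> solves actB i b e.

Definition consistent (S : Type) (mul : S -> S -> S) (one : S)
  (A : Type) (act : A -> S -> A) (X : Type) (E : seq (equation S A X)) : Prop :=
  exists (B : Type) (actB : B -> S -> B) (i : A -> B),
    is_act mul one actB /\ injective i /\
    (forall a s, i (act a s) = actB (i a) s) /\
    solvable_in actB i E.

Definition almost_pure (S : Type) (mul : S -> S -> S) (one : S)
  (A : Type) (act : A -> S -> A) : Prop :=
  forall E : seq (equation S A unit),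
    consistent mul one act E -> solvable_in act id E.

Definition absolutely_pure (S : Type) (mul : S -> S -> S) (one : S)
  (A : Type) (act : A -> S -> A) : Prop :=
  forall (n : nat) (E : seq (equation S A 'I_n)),
    consistent mul one act E -> solvable_in act id E.

(* Main.v *)
From Stdlib Require Import List ClassicalEpsilon ProofIrrelevance.
Require Import Defs.
From mathcomp Require Import all_boot.

Lemma in_seq_In (T : eqType) (x : T) (l : seq T) : x \in l -> List.In x l.
Proof.
elim: l => [|y l IH] //=; rewrite in_cons => /orP [/eqP ->|H]; [left|right] => //.
exact: IH.
Qed.

Definition EM (P : Prop) : {P} + {~ P} := excluded_middle_informative P.

Section Step.
Variables (S : finType) (mul : S -> S -> S) (one : S) (A : Type) (act : A -> S -> A).
Hypothesis HA : is_act mul one act.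
Hypothesis Hap : almost_pure mul one act.
Variables (B : Type) (actB : B -> S -> B) (i : A -> B).
Hypothesis HB : is_act mul one actB.
Hypothesis Hi : injective i.
Hypothesis Heq : forall a s, i (act a s) = actB (i a) s.
Variable b0 : B.

Definition E0 : list (equation S A unit) :=
  flat_map (fun s =>
    app (flat_map (fun t => if EM (actB b0 s = actB b0 t) then @EqVV S A unit tt s tt t :: nil else nil) (enum S))
        (match EM (exists a, actB b0 s = i a) with
         | left h => @EqVC S A unit tt s (proj1_sig (constructive_indefinite_description _ h)) :: nil
         | right _ => nil end)) (enum S).

Lemma E0_sound e : List.In e E0 -> solves actB i (fun _ => b0) e.
Proof.
rewrite /E0 in_flat_map => -[s [_ H]].
case: (in_app_or _ _ _ H) => {}H.
  move: H; rewrite in_flat_map => -[t [_]].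
  case: EM => h //= [<-|[]] //.
move: H; case: EM => h //= [<-|[]] //=.
by case: (constructive_indefinite_description _ h).
Qed.

Lemma E0_cons : consistent mul one act E0.
Proof.
exists B, actB, i; do 3 (split => //).
exists (fun _ => b0) => e; exact: E0_sound.
Qed.

Definition a0 : A := proj1_sig (constructive_indefinite_description _ (@Hap E0 E0_cons)) tt.

Lemma a0_VV s t : actB b0 s = actB b0 t -> act a0 s = act a0 t.
Proof.
move=> h; have := proj2_sig (constructive_indefinite_description _ (@Hap E0 E0_cons)).
rewrite /a0; set bA := proj1_sig _ => HbA.
have : List.In (@EqVV S A unit tt s tt t) E0.
  rewrite /E0 in_flat_map; exists s; split; first by apply: in_seq_In; rewrite mem_enum.
  apply: in_or_app; left; rewrite in_flat_map; exists t; split.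
    by apply: in_seq_In; rewrite mem_enum.
  by destruct (EM (actB b0 s = actB b0 t)); [left|].
by move/HbA.
Qed.

Lemma a0_VC s a : actB b0 s = i a -> act a0 s = a.
Proof.
move=> h; have := proj2_sig (constructive_indefinite_description _ (@Hap E0 E0_cons)).
rewrite /a0; set bA := proj1_sig _ => HbA.
have ex : exists a, actB b0 s = i a by exists a.
have : List.In (@EqVC S A unit tt s (proj1_sig (constructive_indefinite_description _ ex))) E0.
  rewrite /E0 in_flat_map; exists s; split; first by apply: in_seq_In; rewrite mem_enum.
  apply: in_or_app; right; destruct (EM (exists a, actB b0 s = i a)) as [h'|h']; last by exfalso.
  by left; rewrite (proof_irrelevance _ h' ex).
move/HbA => /= ->; case: (constructive_indefinite_description _ ex) => a' /= Ha'.
by apply: Hi; rewrite -Ha'.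
Qed.

Definition C (b : B) : Prop := (exists a, b = i a) \/ (exists s, b = actB b0 s).

Definition phi (b : B) : A :=
  match EM (exists a, b = i a) with
  | left h => proj1_sig (constructive_indefinite_description _ h)
  | right _ => match EM (exists s, b = actB b0 s) with
               | left h => act a0 (proj1_sig (constructive_indefinite_description _ h))
               | right _ => a0 end end.

Lemma phi_i b a : b = i a -> phi b = a.
Proof.
move=> ->; rewrite /phi; case: EM => [h|h]; last by exfalso; apply: h; exists a.
case: (constructive_indefinite_description _ h) => a' /= H; exact: Hi.
Qed.

Lemma phi_b0 b s : b = actB b0 s -> phi b = act a0 s.
Proof.
move=> Hb; rewrite /phi; case: EM => [h|h].
  case: (constructive_indefinite_description _ h) => a' /= H.
  by symmetry; apply: a0_VC; rewrite -Hb.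
case: EM => [h'|h']; last by exfalso; apply: h'; exists s.
case: (constructive_indefinite_description _ h') => s' /= H.
by apply: a0_VV; rewrite -H.
Qed.

Lemma C_act b s : C b -> C (actB b s) /\ phi (actB b s) = act (phi b) s.
Proof.
case: HB => H1 H2.
case=> [[a ->]|[s' ->]].
  split; first by left; exists (act a s); rewrite Heq.
  by rewrite (@phi_i (i a) a erefl) (@phi_i (actB (i a) s) (act a s)) // Heq.
split; first by right; exists (mul s' s); rewrite H2.
rewrite (@phi_b0 (actB b0 s') s' erefl) (@phi_b0 _ (mul s' s)); last by rewrite H2.
by case: HA => _ ->.
Qed.

Definition P : Type := (A + {b : B | ~ C b})%type.

Definition psi (b : B) : P :=
  match EM (C b) with left _ => inl (phi b) | right h => inr (exist _ b h) end.

Definition actP (p : P) (s : S) : P :=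
  match p with inl a => inl (act a s) | inr b => psi (actB (proj1_sig b) s) end.

Lemma psi_hom b s : psi (actB b s) = actP (psi b) s.
Proof.
rewrite /psi; case: (EM (C b)) => h /=.
  have [h1 h2] := @C_act b s h.
  by case: EM => h' //; rewrite h2.
by [].
Qed.

Lemma psi_i a : psi (i a) = inl a.
Proof.
rewrite /psi; case: EM => h; first by rewrite (@phi_i (i a) a erefl).
by exfalso; apply: h; left; exists a.
Qed.

Lemma psi_b0 : psi b0 = inl a0.
Proof.
have hb : b0 = actB b0 one by case: HB.
rewrite /psi; case: EM => h; first by rewrite (@phi_b0 b0 one hb); case: HA => ->.
by exfalso; apply: h; right; exists one.
Qed.

Lemma actP_act : is_act mul one actP.
Proof.
case: HA => A1 A2; case: HB => B1 B2.
split.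
  case=> [a|[b h]] /=; first by rewrite A1.
  rewrite B1 /psi; case: EM => h' //.
  by rewrite (proof_irrelevance _ h h').
case=> [a|[b h]] s t /=; first by rewrite A2.
by rewrite B2 psi_hom.
Qed.

Lemma step : exists (Q : Type) (actQ : Q -> S -> Q) (j : A -> Q) (ps : B -> Q),
    is_act mul one actQ /\ injective j /\ (forall a s, j (act a s) = actQ (j a) s) /\
    (forall a, ps (i a) = j a) /\ (forall b s, ps (actB b s) = actQ (ps b) s) /\
    exists a, ps b0 = j a.
Proof.
exists P, actP, inl, psi; split; first exact: actP_act.
split; first by move=> x y [].
split; first by [].
split; first exact: psi_i.
split; first exact: psi_hom.
by exists a0; exact: psi_b0.
Qed.

End Step.

Lemma iterate (S : finType) (mul : S -> S -> S) (one : S) (A : Type) (act : A -> S -> A)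
  (HA : is_act mul one act) (Hap : almost_pure mul one act) :
  forall (B : Type) (actB : B -> S -> B) (i : A -> B) (l : list B),
  is_act mul one actB -> injective i -> (forall a s, i (act a s) = actB (i a) s) ->
  exists (Q : Type) (actQ : Q -> S -> Q) (j : A -> Q) (ps : B -> Q),
    is_act mul one actQ /\ injective j /\ (forall a s, j (act a s) = actQ (j a) s) /\
    (forall a, ps (i a) = j a) /\ (forall b s, ps (actB b s) = actQ (ps b) s) /\
    (forall y, List.In y l -> exists a, ps y = j a).
Proof.
move=> B actB i l; move Hn: (size l) => n.
elim: n B actB i l Hn => [|n IH] B actB i [|y l] //= Hn HB Hi Heq.
  by exists B, actB, i, id; do 5 (split => //).
have [Q1 [act1 [j1 [ps1 [H1 [Hj1 [Hjeq1 [Hpsi1 [Hhom1 [a1 Ha1]]]]]]]]]] :=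
  @step _ _ _ _ _ HA Hap _ _ _ HB Hi Heq y.
case: Hn => Hn.
have [Q [actQ [j [ps [HQ [Hj [Hjeq [Hpsi [Hhom Hl]]]]]]]]] :=
  IH Q1 act1 j1 (map ps1 l) (etrans (size_map _ _) Hn) H1 Hj1 Hjeq1.
exists Q, actQ, j, (fun b => ps (ps1 b)); do 3 (split => //); split.
  by move=> a; rewrite Hpsi1 Hpsi.
split; first by move=> b s; rewrite Hhom1 Hhom.
move=> z [<-|Hz].
  by exists a1; rewrite Ha1 Hpsi.
apply: Hl; exact: in_map.
Qed.

Theorem mainTheorem2 (S : finType) (mul : S -> S -> S) (one : S)
  (HS : is_monoid mul one) (A : Type) (act : A -> S -> A)
  (HA : is_act mul one act) :
  almost_pure mul one act -> absolutely_pure mul one act.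
Proof.
move=> Hap n E [B [actB [i [HB [Hi [Heq [b Hb]]]]]]].
have [Q [actQ [j [ps [HQ [Hj [Hjeq [Hpsi [Hhom Hl]]]]]]]]] :=
  @iterate _ _ _ _ _ HA Hap _ _ _ (map b (enum 'I_n)) HB Hi Heq.
have ex : forall x, exists a, ps (b x) = j a.
  move=> x; apply: Hl; apply: in_map; apply: in_seq_In; by rewrite mem_enum.
exists (fun x => proj1_sig (constructive_indefinite_description _ (ex x))) => e He.
have := Hb e He; case: e He => [x s y t|x s c] _ /=.
  case: (constructive_indefinite_description _ (ex x)) => ax /= Hx.
  case: (constructive_indefinite_description _ (ex y)) => ay /= Hy.
  move=> H; apply: Hj; rewrite !Hjeq -Hx -Hy -!Hhom H //.
case: (constructive_indefinite_description _ (ex x)) => ax /= Hx.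
move=> H; apply: Hj; rewrite Hjeq -Hx -Hhom H Hpsi //.
Qed.
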